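(* Let $\mathcal{M}$ be a separable metric space, let $f:\mathcal{M}\to\mathcal{M}$ be a continuous bijection with continuous inverse, and let $\mathcal{X}\subseteq\mathcal{M}$ be forward invariant under $f$ and path connected. Consider $x_{k+1}=f(x_k)$ on $\mathcal{X}$ with set of $\omega$-limit sets $\mathcal{W}$ and set of $\alpha$-limit sets $\mathcal{A}$. Suppose: (T1) there exist a separable metric space $\mathcal{Z}$, a continuous bijection $g:\mathcal{Z}\to\mathcal{Z}$ with continuous inverse, and a continuous map $F:\mathcal{X}\to\mathcal{Z}$ with $F\circ f=g\circ F$ on $\mathcal{X}$, such that $z_{k+1}=g(z_k)$ and $z_{k+1}=g^{-1}(z_k)$ on $\mathcal{Z}$ both have closed basins; (T2) every trajectory in $\mathcal{X}$ is forward precompact or backward precompact in $\mathcal{X}$; (T3) $\mathcal{W}\cup\mathcal{A}$ is countable. Let $\widehat{\mathcal{W}}$ be the set of $\Omega\in\mathcal{W}$ such that $D^+_{\mathcal{X}}(\Omega)$ contains a point whose trajectory is forward precompact in $\mathcal{X}$, and let $\widehat{\mathcal{A}}$ be the set of $\Gamma\in\mathcal{A}$ such that $D^-_{\mathcal{X}}(\Gamma)$ contains a point whose trajectory is backward precompact in $\mathcal{X}$. Then $F(S)=F(S')$ for all $S,S'\in\widehat{\mathcal{W}}\cup\widehat{\mathcal{A}}$.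
   Context: Forward orbit of $\xi$: $\{f^k(\xi)\mid k\in\mathbb{N}\}$; backward orbit: $\{f^{-k}(\xi)\mid k\in\mathbb{N}\}$. A set is precompact in $\mathcal{X}$ if its closure in $\mathcal{X}$ is compact; a trajectory is forward (backward) precompact if its forward (backward) orbit is precompact. $\omega_{\mathcal{X}}(\xi)$ is the set of $x\in\mathcal{X}$ with $f^{k_j}(\xi)\to x$ for some $k_j\to\infty$; $\alpha_{\mathcal{X}}(\xi)$ likewise with $f^{-k_j}$. $\mathcal{W}=\{\omega_{\mathcal{X}}(\xi)\mid\xi\in\mathcal{X}\}$, $\mathcal{A}=\{\alpha_{\mathcal{X}}(\xi)\mid\xi\in\mathcal{X}\}$, $D^+_{\mathcal{X}}(\Omega)=\{\xi\in\mathcal{X}\mid\omega_{\mathcal{X}}(\xi)=\Omega\}$, $D^-_{\mathcal{X}}(\Gamma)=\{\xi\in\mathcal{X}\mid\alpha_{\mathcal{X}}(\xi)=\Gamma\}$. A system has closed basins if the domain of attraction of each of its $\omega$-limit sets is closed (for a time reversal: each domain of repulsion of each $\alpha$-limit set of the original system is closed). Same notions on $\mathcal{Z}$ for $g$. *)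

(* Defs.v *)
From HB Require Import structures.
From mathcomp Require Import all_boot all_order all_algebra.
From mathcomp Require Import all_classical all_reals all_analysis.
Set Implicit Arguments. Unset Strict Implicit. Unset Printing Implicit Defensive.
Import Order.TTheory GRing.Theory Num.Theory.
Local Open Scope classical_set_scope.
Local Open Scope ring_scope.

Definition metric_space (R : realType) (M : pseudoMetricType R) : Prop :=
  hausdorff_space M.

Definition separable_space (T : topologicalType) : Prop :=
  exists S : set T, countable S /\ dense S.

Definition path_connected (R : realType) (T : topologicalType) (X : set T) : Prop :=
  forall x y, X x -> X y ->
    exists gam : R -> T, {within `[0, 1], continuous gam} /\
      gam 0 = x /\ gam 1 = y /\ gam @` `[0, 1] `<=` X.

Definition fwd_orbit (T : Type) (f : T -> T) (xi : T) : set T :=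
  [set x | exists k : nat, x = iter k f xi].
Definition bwd_orbit (T : Type) (finv : T -> T) (xi : T) : set T :=
  [set x | exists k : nat, x = iter k finv xi].

(* S is precompact in X: S lies in X and its closure in X (= closure S ∩ X)
   is compact. *)
Definition precompact_in (T : topologicalType) (X S : set T) : Prop :=
  S `<=` X /\ compact (closure S `&` X).

Definition omega_lim (T : topologicalType) (X : set T) (f : T -> T) (xi : T)
  : set T :=
  [set x | X x /\ exists k : nat -> nat,
     (forall N, exists J, forall j, (J <= j)%N -> (N <= k j)%N) /\
     (fun j => iter (k j) f xi) @ \oo --> x].

Definition alpha_lim (T : topologicalType) (X : set T) (finv : T -> T) (xi : T)
  : set T := omega_lim X finv xi.

Definition Wset (T : topologicalType) (X : set T) (f : T -> T) : set (set T) :=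
  [set omega_lim X f xi | xi in X].
Definition Aset (T : topologicalType) (X : set T) (finv : T -> T) : set (set T) :=
  [set alpha_lim X finv xi | xi in X].

Definition Dplus (T : topologicalType) (X : set T) (f : T -> T) (Om : set T)
  : set T := [set xi | X xi /\ omega_lim X f xi = Om].
Definition Dminus (T : topologicalType) (X : set T) (finv : T -> T) (Ga : set T)
  : set T := [set xi | X xi /\ alpha_lim X finv xi = Ga].

Definition closed_basins (T : topologicalType) (h : T -> T) : Prop :=
  forall Om, Wset setT h Om -> closed (Dplus setT h Om).

Definition What (T : topologicalType) (X : set T) (f : T -> T) : set (set T) :=
  [set Om | Wset X f Om /\
     exists xi, Dplus X f Om xi /\ precompact_in X (fwd_orbit f xi)].
Definition Ahat (T : topologicalType) (X : set T) (finv : T -> T) : set (set T) :=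
  [set Ga | Aset X finv Ga /\
     exists xi, Dminus X finv Ga xi /\ precompact_in X (bwd_orbit finv xi)].

(* Main.v *)
Require Import Defs.
From HB Require Import structures.
From mathcomp Require Import all_boot all_order all_algebra.
From mathcomp Require Import all_classical all_reals all_analysis.
From mathcomp Require Import lra.
Import Order.TTheory GRing.Theory Num.Theory.
Local Open Scope classical_set_scope.
Local Open Scope ring_scope.

Set Implicit Arguments. Unset Strict Implicit. Unset Printing Implicit Defensive.

Section Sier.
Variable R : realType.

Definition fib_closed (c : R -> nat) := forall (v : nat) (t : R), 0 <= t <= 1 ->
  (forall e : R, 0 < e -> exists s, 0 <= s <= 1 /\ `|s - t| < e /\ c s = v) -> c t = v.

Lemma sier_core (c : R -> nat) (n : nat) (a b : R) : fib_closed c ->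
  0 <= a -> a <= b -> b <= 1 -> c a <> c b -> c a <> n ->
  exists a' b', [/\ a <= a', a' <= b', b' <= b, c a' <> c b' &
     forall t, a' <= t <= b' -> c t <> n].
Proof.
move=> Hcl a0 ab b1 cab can.
have [Hall|] := pselect (forall t, a <= t <= b -> c t <> n).
  by exists a, b; split.
move=> /existsNP [t0 /not_implyP [t0ab /contrapT ct0]].
pose A := [set t | (a <= t <= b) /\ c t = n].
have An0 : A !=set0 by exists t0.
have hiA : has_inf A by split => //; exists a => t [/andP[]].
set s := inf A.
have as_ : a <= s by apply: lb_le_inf => // t [/andP[]].
have sb : s <= b by apply: (le_trans (ge_inf hiA.2 (conj t0ab ct0))); case/andP: t0ab.
have cs : c s = n.
  apply: Hcl; first by rewrite (le_trans a0 as_) (le_trans sb b1).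
  move=> e e0; have [t [tab ctn] tlt] := inf_adherent e0 hiA.
  exists t; split; last split => //.
    by case/andP: tab => ta tb; rewrite (le_trans a0 ta) (le_trans tb b1).
  have st : s <= t := ge_inf hiA.2 (conj tab ctn).
  by rewrite ger0_norm ?subr_ge0 //; lra.
have a_s : a < s by rewrite lt_neqAle as_ andbT; apply/eqP => eas; apply: can; rewrite eas.
pose B := [set t | (a <= t <= s) /\ c t = c a].
have hsB : has_sup B by split; [exists a; split => //; rewrite lexx as_| exists s => t [/andP[]]].
set d := sup B.
have ad : a <= d by apply: sup_upper_bound => //; split => //; rewrite lexx as_.
have ds : d <= s by apply: ge_sup; [exact: hsB.1| move=> t [/andP[]]].
have cd : c d = c a.
  apply: Hcl; first by rewrite (le_trans a0 ad) (le_trans ds (le_trans sb b1)).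
  move=> e e0; have [t [tab ctn] tlt] := sup_adherent e0 hsB.
  exists t; split; last split => //.
    by case/andP: tab => ta tb; rewrite (le_trans a0 ta) (le_trans tb (le_trans sb b1)).
  have st : t <= d := sup_upper_bound hsB (conj tab ctn).
  rewrite -/d in tlt; by rewrite ler0_norm ?subr_le0 //; lra.
have d_s : d < s by rewrite lt_neqAle ds andbT; apply/eqP => eds; apply: can; rewrite -cd eds cs.
pose e := (d + s) / 2.
have de : d < e by rewrite /e; lra.
have es : e < s by rewrite /e; lra.
exists a, e; split.
- by [].
- exact: le_trans ad (ltW de).
- exact: le_trans (ltW es) sb.
- move=> cae; have : B e by split => //; rewrite (le_trans ad (ltW de)) (ltW es).
  by move=> /(sup_upper_bound hsB); rewrite leNgt de.
- move=> t /andP[ta te] ctn.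
  have : A t by split => //; rewrite ta (le_trans te (le_trans (ltW es) sb)).
  move=> /(ge_inf hiA.2); rewrite leNgt => /negP; apply.
  exact: le_lt_trans te es.
Qed.

Lemma oneK (x : R) : 1 - (1 - x) = x.
Proof. lra. Qed.

Lemma fib_closed_rev (c : R -> nat) : fib_closed c -> fib_closed (fun t => c (1 - t)).
Proof.
move=> Hcl v t /andP[t0 t1] H; apply: Hcl; first by apply/andP; split; lra.
move=> e e0; have [s [/andP[s0 s1] [st cs]]] := H e e0.
exists (1 - s); split; first by apply/andP; split; lra.
split => //.
have -> : 1 - s - (1 - t) = t - s by lra.
by rewrite distrC.
Qed.

Lemma sier_step (c : R -> nat) (n : nat) (a b : R) : fib_closed c ->
  0 <= a -> a <= b -> b <= 1 -> c a <> c b ->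
  exists a' b', [/\ a <= a', a' <= b', b' <= b, c a' <> c b' &
     forall t, a' <= t <= b' -> c t <> n].
Proof.
move=> Hcl a0 ab b1 cab.
have [can|can] := EM (c a = n); last exact: sier_core.
have cbn : c b <> n by move=> cbn; apply: cab; rewrite can cbn.
have := @sier_core (fun t => c (1 - t)) n (1 - b) (1 - a) (fib_closed_rev Hcl).
rewrite !oneK.
case; [lra|lra|lra|by move=> /esym|exact: cbn|].
move=> a2 [b2 [h1 h2 h3 h4 h5]].
exists (1 - b2), (1 - a2); split; [lra|lra|lra|by move=> /esym|].
move=> t /andP[t1 t2]; rewrite -[t]oneK; apply: h5; apply/andP; split; lra.
Qed.

Lemma sierpinski (c : R -> nat) : fib_closed c -> c 0 = c 1.
Proof.
move=> Hcl; apply: contrapT => H01.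
pose P (p : nat * (R * R)) (q : R * R) :=
  (0 <= p.2.1 /\ p.2.1 <= p.2.2 /\ p.2.2 <= 1 /\ c p.2.1 <> c p.2.2) ->
  [/\ p.2.1 <= q.1, q.1 <= q.2, q.2 <= p.2.2, c q.1 <> c q.2 &
     forall t, q.1 <= t <= q.2 -> c t <> p.1].
have [step Hstep] : {step & forall p, P p (step p)}.
  apply: choice => -[n [a b]].
  have [[a0 [ab [b1 cab]]]|] := EM (0 <= a /\ a <= b /\ b <= 1 /\ c a <> c b).
    have [a' [b' H]] := sier_step n Hcl a0 ab b1 cab.
    by exists (a', b').
  by move=> nH; exists (0, 0) => /nH.
pose J := fix J (n : nat) : R * R := if n is n'.+1 then step (n', J n') else (0, 1).
have Inv : forall n, 0 <= (J n).1 /\ (J n).1 <= (J n).2 /\ (J n).2 <= 1 /\ c (J n).1 <> c (J n).2.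
  elim => [|n [h0 [h1 [h2 h3]]]] /=; first by split; [|split; [|split]] => //; lra.
  have [] := Hstep (n, J n) (conj h0 (conj h1 (conj h2 h3))) => /= k1 k2 k3 k4 _.
  split; [lra|split; [lra|split; [lra|done]]].
have Mon : forall n, (J n).1 <= (J n.+1).1 /\ (J n.+1).2 <= (J n).2.
  move=> n; have [k1 k2 k3 k4 _] := Hstep (n, J n) (Inv n); by split.
have Mon2 : forall n m, (n <= m)%N -> (J n).1 <= (J m).1 /\ (J m).2 <= (J n).2.
  move=> n; elim => [|m IH]; first by rewrite leqn0 => /eqP ->; split.
  rewrite leq_eqVlt => /orP[/eqP ->|]; first by split.
  rewrite ltnS => /IH [h1 h2]; have [h3 h4] := Mon m; split; [exact: le_trans h1 h3|exact: le_trans h4 h2].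
have ab : forall n m, (J n).1 <= (J m).2.
  move=> n m; have [h1 _] := Mon2 n (maxn n m) (leq_maxl _ _).
  have [_ h2] := Mon2 m (maxn n m) (leq_maxr _ _).
  have [_ [h3 _]] := Inv (maxn n m).
  exact: le_trans h1 (le_trans h3 h2).
pose E := [set (J n).1 | n in [set: nat]].
have hsE : has_sup E.
  split; first by exists (J 0).1, 0%N.
  by exists 1 => _ [n _ <-]; have [_ [h1 [h2 _]]] := Inv n; lra.
set x := sup E.
have ax : forall n, (J n).1 <= x by move=> n; apply: sup_upper_bound => //; exists n.
have xb : forall n, x <= (J n).2.
  by move=> n; apply: ge_sup; [exact: hsE.1| move=> _ [m _ <-]; exact: ab].
have [_ _ _ _ k5] := Hstep (c x, J (c x)) (Inv (c x)).
by apply: (k5 x) => //; rewrite (ax (c x).+1) (xb (c x).+1).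
Qed.
End Sier.

Lemma evP (P : nat -> Prop) :
  (\forall n \near \oo, P n) <-> exists N, forall n, (N <= n)%N -> P n.
Proof. by split => [[N _ HN]|[N HN]]; exists N. Qed.

Lemma within_contP {T U : topologicalType} (A : set T) (f : T -> U) x :
  {within A, continuous f} -> A x ->
  forall B, nbhs (f x) B -> nbhs x [set u | A u -> B (f u)].
Proof.
move=> /subspace_continuousP H Ax B HB; exact: (H x Ax B HB).
Qed.

Section Metric.
Variables (R : realType) (M : pseudoMetricType R).

Lemma cluster_subseq (s : nat -> M) y : cluster (s @ \oo) y ->
  exists phi : nat -> nat, (forall n, (n <= phi n)%N) /\ (s \o phi) @ \oo --> y.
Proof.
move=> Hc.
have H : forall n, exists j, (n <= j)%N /\ ball y (n.+1%:R^-1) (s j).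
  move=> n.
  have := Hc [set z | exists j, (n <= j)%N /\ z = s j] (ball y (n.+1%:R^-1)).
  case.
  - by apply/evP; exists n => j nj; exists j.
  - by apply: nbhsx_ballx; rewrite invr_gt0.
  by move=> z [[j [nj ->]] bz]; exists j.
have [phi Hphi] := choice H.
exists phi; split; first by move=> n; case: (Hphi n).
apply/cvg_ballP => eps eps0.
have := near_infty_natSinv_lt (PosNum eps0) => /evP [N HN].
apply/evP; exists N => n Nn /=.
have [_ hb] := Hphi n; apply: le_ball hb.
have := HN n Nn => /= /ltW; done.
Qed.


Lemma omega_cluster (X : set M) (h : M -> M) x :
  omega_lim X h x = X `&` cluster ((fun n => iter n h x) @ \oo).
Proof.
apply/seteqP; split.
  move=> y [Xy [k [Hk Hcv]]]; split => // A B /evP [N HN] HB.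
  have [J HJ] := Hk N.
  have := Hcv B HB => /evP [J2 HJ2].
  exists (iter (k (J + J2)%N) h x); split.
    by apply: HN; apply: HJ; exact: leq_addr.
  by apply: HJ2; exact: leq_addl.
move=> y [Xy Hc]; have [phi [Hphi Hcv]] := cluster_subseq Hc.
split => //; exists phi; split => // N; exists N => j Nj.
exact: leq_trans Nj (Hphi j).
Qed.

End Metric.

Section Topo.
Variable T : topologicalType.

Lemma cvg_cluster_eq (G : set_system T) {FG : ProperFilter G} (b c : T) :
  hausdorff_space T -> G --> b -> cluster G c -> c = b.
Proof. by move=> hT Gb Gc; have := cvg_cluster Gb Gc => /hT. Qed.

Lemma cluster_map {U : topologicalType} (X : set T) (F : T -> U) (u : nat -> T) y :
  {within X, continuous F} -> (forall n, X (u n)) -> X y ->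
  cluster (u @ \oo) y -> cluster ((F \o u) @ \oo) (F y).
Proof.
move=> FX Xu Xy Hc A B /evP[N HN] HB.
have HU := within_contP FX Xy HB.
have := Hc [set z | exists n, (N <= n)%N /\ z = u n] _ _ HU.
case; first by apply/evP; exists N => n Nn; exists n.
by move=> z [[n [Nn ->]] Uz]; exists (F (u n)); split; [exact: HN| exact: Uz (Xu n)].
Qed.

Lemma cluster_sub (u : nat -> T) (phi : nat -> nat) y :
  (forall n, (n <= phi n)%N) -> cluster ((u \o phi) @ \oo) y -> cluster (u @ \oo) y.
Proof.
move=> Hphi Hc A B /evP[N HN] HB; apply: Hc HB; apply/evP; exists N => n Nn.
apply: HN; exact: leq_trans Nn (Hphi n).
Qed.

Lemma cluster_in_closed (C : set T) (u : nat -> T) y :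
  closed C -> (forall n, C (u n)) -> cluster (u @ \oo) y -> C y.
Proof.
move=> cC Hu Hc; apply: cC => B HB; apply: Hc HB.
by apply/evP; exists 0%N => n _; exact: Hu.
Qed.

Lemma closed_cluster' (G : set_system T) : closed (cluster G).
Proof. rewrite clusterE; apply: closed_bigI => A _; exact: closed_closure. Qed.

Lemma shift_filter (u : nat -> T) : (fun n => u n.+1) @ \oo = u @ \oo.
Proof.
apply/seteqP; split => A /=.
  by move=> H; apply: near_inftyS.
move=> /evP [N HN]; apply/evP; exists N => n Nn; apply: HN; exact: leqW.
Qed.

End Topo.

Lemma omega_shift (R : realType) (Z : pseudoMetricType R) (q : Z -> Z) z :
  omega_lim setT q (q z) = omega_lim setT q z.
Proof.
rewrite !omega_cluster.
have -> : (fun n => iter n q (q z)) = (fun n => iter n.+1 q z).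
  by apply: funext => n; rewrite iterSr.
by rewrite (shift_filter (fun n => iter n q z)).
Qed.


Lemma GA (R : realType) (M Z : pseudoMetricType R) (X : set M) (h : M -> M)
  (k : Z -> Z) (F : M -> Z) x :
  hausdorff_space Z -> {within X, continuous F} ->
  (forall n, X (iter n h x)) -> compact (closure (fwd_orbit h x) `&` X) ->
  (forall n, F (iter n h x) = iter n k (F x)) ->
  omega_lim setT k (F x) = F @` omega_lim X h x.
Proof.
move=> hZ FX Xu cK HF.
rewrite !omega_cluster.
set u := fun n => iter n h x.
have -> : (fun n => iter n k (F x)) = F \o u by apply: funext => n; rewrite /= HF.
apply/seteqP; split.
- move=> b [_ Hb]; have [phi [Hphi Hcv]] := cluster_subseq Hb.
  have FK : ((u \o phi) @ \oo) (closure (fwd_orbit h x) `&` X).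
    apply/evP; exists 0%N => n _; split; last exact: Xu.
    by apply: subset_closure; exists (phi n).
  have [y [Ky Hy]] := cK _ _ FK.
  exists y; first by split; [exact: Ky.2| exact: cluster_sub Hphi Hy].
  have := cluster_map FX (fun n => Xu (phi n)) Ky.2 Hy.
  exact: cvg_cluster_eq hZ Hcv.
- move=> _ [y [Xy Hy] <-]; split => //; exact: cluster_map FX Xu Xy Hy.
Qed.

Lemma seq_within {T U : topologicalType} (X : set T) (F : T -> U) (v : nat -> T) y :
  {within X, continuous F} -> X y -> (forall j, X (v j)) -> v @ \oo --> y ->
  (F \o v) @ \oo --> F y.
Proof.
move=> FX Xy Xv Hv B HB; have := Hv _ (within_contP FX Xy HB) => /evP [N HN].
apply/evP; exists N => n Nn; exact: HN n Nn (Xv n).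
Qed.

Lemma cont_iter {T : topologicalType} (p : T -> T) n :
  continuous p -> continuous (iter n p).
Proof.
move=> cp; elim: n => [|n IH] z /=; first exact: cvg_id.
exact: (continuous_comp (IH z) (cp _)).
Qed.

Lemma iter_cancel {T : Type} (h hinv : T -> T) x n m :
  cancel h hinv -> (n <= m)%N -> iter n hinv (iter m h x) = iter (m - n) h x.
Proof.
move=> hK; elim: n => [|n IH] nm /=; first by rewrite subn0.
rewrite IH ?(ltnW nm) // -subnSK //=; exact: hK.
Qed.

Lemma omega_iter (R : realType) (Z : pseudoMetricType R) (k kinv : Z -> Z) w m :
  cancel k kinv ->
  omega_lim setT kinv (iter m k w) = omega_lim setT kinv w.
Proof.
move=> kK; elim: m => [|m IH] //=.
by rewrite -omega_shift kK.
Qed.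

Lemma GB (R : realType) (M Z : pseudoMetricType R) (X : set M) (h hinv : M -> M)
  (k kinv : Z -> Z) (F : M -> Z) x y :
  hausdorff_space M -> continuous hinv -> cancel h hinv ->
  {within X, continuous F} ->
  (forall n, X (iter n h x)) -> compact (closure (fwd_orbit h x) `&` X) ->
  (forall n, F (iter n h x) = iter n k (F x)) ->
  cancel k kinv -> closed_basins kinv ->
  omega_lim X h x y ->
  (forall n, (closure (fwd_orbit h x) `&` X) (iter n hinv y)) /\
  omega_lim setT kinv (F y) = omega_lim setT kinv (F x).
Proof.
move=> hM chinv hK FX Xu cK HF kK cb [Xy [kk [Hk Hcv]]].
have clK := compact_closed hM cK.
split.
  move=> n; have := @closed_cvg nat M \oo _ (fun j => iter n hinv (iter (kk j) h x)) _ clK.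
  apply.
    have [J HJ] := Hk n; apply/evP; exists J => j Jj.
    rewrite iter_cancel //; last exact: HJ.
    split; last exact: Xu.
    by apply: subset_closure; eexists.
  exact: (@cvg_comp _ _ _ (fun j => iter (kk j) h x) (iter n hinv) _ _ _ Hcv (@cont_iter _ hinv n chinv y)).
have cl := cb _ (ex_intro2 _ _ (F x) I erefl).
have := @closed_cvg nat Z \oo _ (F \o (fun j => iter (kk j) h x)) _ cl _ _
  (seq_within FX Xy (fun j => Xu (kk j)) Hcv).
case.
  apply/evP; exists 0%N => j _; split => //=.
  by rewrite HF omega_iter.
by [].
Qed.

Lemma omega_nonempty (R : realType) (M : pseudoMetricType R) (X : set M) (h : M -> M) x :
  (forall n, X (iter n h x)) -> compact (closure (fwd_orbit h x) `&` X) ->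
  exists y, omega_lim X h x y.
Proof.
move=> Xu cK.
have FK : ((fun n => iter n h x) @ \oo) (closure (fwd_orbit h x) `&` X).
  apply/evP; exists 0%N => n _; split; last exact: Xu.
  by apply: subset_closure; exists n.
have [y [Ky Hy]] := cK _ _ FK.
by exists y; rewrite omega_cluster; split => //; exact: Ky.2.
Qed.

Lemma prec_from_K {T : topologicalType} (X O S : set T) :
  compact (closure O `&` X) -> S `<=` closure O `&` X -> precompact_in X S.
Proof.
move=> cK SK; split; first by move=> z /SK [].
have -> : closure S `&` X = (closure O `&` X) `&` closure S.
  apply/seteqP; split => z.
    move=> [cz Xz]; split => //; split => //.
    have : closure (closure O) z.
      by apply: (closureS _ cz) => w /SK [].
    by rewrite -(closure_id (closure O)).1 //; exact: closed_closure.
  by move=> [[_ Xz] cz].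
apply: compact_closedI cK _; exact: closed_closure.
Qed.

Lemma omega_inv (R : realType) (Z : pseudoMetricType R) (q qinv : Z -> Z) z b :
  continuous qinv -> cancel q qinv ->
  omega_lim setT q z b -> omega_lim setT q z (qinv b).
Proof.
move=> cqi qK; rewrite !omega_cluster => -[_ Hb]; split => //.
have := cluster_map (@continuous_subspaceT _ _ setT _ cqi) (fun n => I) I Hb.
have -> : (qinv \o (fun n => iter n q z)) @ \oo = (fun n => iter n q z) @ \oo; last by [].
rewrite -(shift_filter (qinv \o (fun n => iter n q z))).
have -> : (fun n => (qinv \o (fun n => iter n q z)) n.+1) = (fun n => iter n q z).
  by apply: funext => n /=; rewrite qK.
by [].
Qed.

Lemma omega_sub (R : realType) (Z : pseudoMetricType R) (q qinv : Z -> Z) z w :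
  continuous qinv -> cancel q qinv ->
  omega_lim setT q z w -> omega_lim setT qinv w `<=` omega_lim setT q z.
Proof.
move=> cqi qK Hw.
have Hn : forall n, omega_lim setT q z (iter n qinv w).
  by elim => [|n IH] //=; exact: omega_inv.
have cl : closed (omega_lim setT q z).
  rewrite omega_cluster setTI; exact: closed_cluster'.
move=> b; rewrite [X in X b -> _]omega_cluster => -[_ Hb].
exact: cluster_in_closed cl Hn Hb.
Qed.

Lemma const_val (R : realType) (M Z : pseudoMetricType R) (X : set M) (F : M -> Z)
  (q : Z -> Z) (C : set (set M)) (i : set M -> nat) :
  path_connected R X -> {within X, continuous F} -> closed_basins q ->
  {in C &, injective i} ->
  (forall x, X x -> exists Om, C Om /\ omega_lim setT q (F x) = F @` Om) ->
  forall x x', X x -> X x' -> omega_lim setT q (F x) = omega_lim setT q (F x').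
Proof.
move=> pc FX cb iinj HC x x' Xx Xx'.
pose val x := omega_lim setT q (F x).
have H0 : forall V, exists Om0, (exists Om, C Om /\ V = F @` Om) ->
    C Om0 /\ V = F @` Om0.
  move=> V; have [[Om [COm ->]]|nH] := EM (exists Om, C Om /\ V = F @` Om).
    by exists Om.
  by exists set0 => /nH.
have [sig Hsig] := choice H0.
have [gam [gc [g0 [g1 gX]]]] := pc x x' Xx Xx'.
have I01 : forall t : R, 0 <= t <= 1 -> (`[0, 1]%classic : set R) t.
  by move=> t t01; rewrite /= in_itv /=.
have gXt : forall t, 0 <= t <= 1 -> X (gam t).
  by move=> t t01; apply: gX; exists t => //; exact: I01.
have Hv : forall t, 0 <= t <= 1 -> C (sig (val (gam t))) /\ val (gam t) = F @` sig (val (gam t)).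
  move=> t t01; apply: Hsig; have [Om [COm e]] := HC _ (gXt t t01); by exists Om.
pose c t := i (sig (val (gam t))).
have cinj : forall s t, 0 <= s <= 1 -> 0 <= t <= 1 -> c s = c t -> val (gam s) = val (gam t).
  move=> s t s01 t01 cst; have [Cs es] := Hv s s01; have [Ct et] := Hv t t01.
  have e := iinj _ _ (mem_set Cs) (mem_set Ct) cst.
  by rewrite {1}es et e.
have fc : fib_closed c.
  move=> v t t01 H.
  have [s0 [s001 [_ cs0]]] := H 1 ltr01.
  rewrite -cs0 /c; congr (i (sig _)).
  have cl := cb _ (ex_intro2 _ _ (F (gam s0)) I erefl).
  suff : Dplus setT q (omega_lim setT q (F (gam s0))) (F (gam t)) by case.
  apply: cl => N HN.
  have HU := within_contP FX (gXt t t01) HN.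
  have := within_contP gc (I01 t t01) HU.
  move=> /nbhs_ballP [e /= e0 He].
  have [s [s01 [st cs]]] := H e e0.
  exists (F (gam s)); split.
    split => //; apply: cinj => //; by rewrite cs cs0.
  apply: (He s _ (I01 s s01) (gXt s s01)).
  by rewrite /ball /= distrC.
have := sierpinski fc.
move=> /cinj; rewrite g0 g1; apply; by rewrite ?ler01 ?lexx.
Qed.

Unset Implicit Arguments. Set Strict Implicit.

Theorem lemma28 (R : realType) (M : pseudoMetricType R)
  (f finv : M -> M) (X : set M)
  (Z : pseudoMetricType R) (g ginv : Z -> Z) (F : M -> Z) :
  metric_space M -> separable_space M ->
  continuous f -> continuous finv -> cancel f finv -> cancel finv f ->
  (forall x, X x -> X (f x)) ->
  path_connected R X ->
  (* (T1) *)
  metric_space Z -> separable_space Z ->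
  continuous g -> continuous ginv -> cancel g ginv -> cancel ginv g ->
  {within X, continuous F} ->
  (forall x, X x -> F (f x) = g (F x)) ->
  closed_basins g -> closed_basins ginv ->
  (* (T2) *)
  (forall xi, X xi ->
     precompact_in X (fwd_orbit f xi) \/ precompact_in X (bwd_orbit finv xi)) ->
  (* (T3) *)
  countable (Wset X f `|` Aset X finv) ->
  forall S S', (What X f S \/ Ahat X finv S) ->
               (What X f S' \/ Ahat X finv S') ->
               F @` S = F @` S'.
Proof.
move=> hM sepM cf cfinv fK finvK Xinv pc hZ sepZ cg cginv gK ginvK FX Fconj cbg cbgi
  T2 T3 S S' HS HS'.
have Hf : forall x, X x -> forall n, X (iter n f x) /\ F (iter n f x) = iter n g (F x).
  move=> x Xx; elim => [|n [Xn Fn]] //=; split; [exact: Xinv | by rewrite Fconj // Fn].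
have Hb : forall x, (forall n, X (iter n finv x)) ->
    forall n, F (iter n finv x) = iter n ginv (F x).
  move=> x Xb; elim => [|n IH] //=.
  have := Fconj _ (Xb n.+1) => /=; rewrite finvK IH => e.
  by rewrite e gK.
have HP : forall x, X x -> exists Om, Wset X f Om /\
    omega_lim setT g (F x) = F @` Om.
  move=> x Xx; case: (T2 x Xx) => [[sub cK]|[sub cK]].
    exists (omega_lim X f x); split; first by exists x.
    exact: GA hZ FX (fun n => (Hf x Xx n).1) cK (fun n => (Hf x Xx n).2).
  have Xu : forall n, X (iter n finv x) by move=> n; apply: sub; exists n.
  have [y Hy] := omega_nonempty Xu cK.
  have [Ka Eb] := GB hM cf finvK FX Xu cK (Hb x Xu) ginvK cbg Hy.
  have Xy : X y by have := Ka 0%N; case.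
  have pre : precompact_in X (fwd_orbit f y).
    by apply: prec_from_K cK _ => _ [n ->]; exact: Ka n.
  exists (omega_lim X f y); split; first by exists y.
  rewrite -Eb; exact: GA hZ FX (fun n => (Hf y Xy n).1) pre.2 (fun n => (Hf y Xy n).2).
have HQ : forall x, X x -> exists Om, Aset X finv Om /\
    omega_lim setT ginv (F x) = F @` Om.
  move=> x Xx; case: (T2 x Xx) => [[sub cK]|[sub cK]]; last first.
    have Xu : forall n, X (iter n finv x) by move=> n; apply: sub; exists n.
    exists (omega_lim X finv x); split; first by exists x.
    exact: GA hZ FX Xu cK (Hb x Xu).
  have Xu : forall n, X (iter n f x) by move=> n; exact: (Hf x Xx n).1.
  have [y Hy] := omega_nonempty Xu cK.
  have [Ka Eb] := GB hM cfinv fK FX Xu cK (fun n => (Hf x Xx n).2) gK cbgi Hy.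
  have Xy : X y by have := Ka 0%N; case.
  have Xb : forall n, X (iter n finv y) by move=> n; have [] := Ka n.
  have pre : precompact_in X (bwd_orbit finv y).
    by apply: prec_from_K cK _ => _ [n ->]; exact: Ka n.
  exists (omega_lim X finv y); split; first by exists y.
  rewrite -Eb; exact: GA hZ FX Xb pre.2 (Hb y Xb).
have [i iinj] := countable_injP _ T3.
have iW : {in Wset X f &, injective i}.
  move=> a b /set_mem Ha /set_mem Hb'; apply: iinj; apply: mem_set; by left.
have iA : {in Aset X finv &, injective i}.
  move=> a b /set_mem Ha /set_mem Hb'; apply: iinj; apply: mem_set; by right.
have Wconst := const_val pc FX cbg iW HP.
have Aconst := const_val pc FX cbgi iA HQ.
have HW : forall S0, What X f S0 -> exists xi, X xi /\
    precompact_in X (fwd_orbit f xi) /\ F @` S0 = omega_lim setT g (F xi).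
  move=> S0 [_ [xi [[Xxi <-] pre]]]; exists xi; split => //; split => //.
  symmetry; exact: GA hZ FX (fun n => (Hf xi Xxi n).1) pre.2 (fun n => (Hf xi Xxi n).2).
have HA : forall S0, Ahat X finv S0 -> exists eta, X eta /\
    precompact_in X (bwd_orbit finv eta) /\ F @` S0 = omega_lim setT ginv (F eta).
  move=> S0 [_ [eta [[Xe <-] pre]]].
  have Xu : forall n, X (iter n finv eta) by move=> n; apply: pre.1; exists n.
  exists eta; split => //; split => //.
  symmetry; exact: GA hZ FX Xu pre.2 (Hb eta Xu).
have Mixed : forall xi eta, X xi -> precompact_in X (fwd_orbit f xi) ->
    X eta -> precompact_in X (bwd_orbit finv eta) ->
    omega_lim setT g (F xi) = omega_lim setT ginv (F eta).
  move=> xi eta Xxi [subx cKx] Xeta [sube cKe].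
  have Xux : forall n, X (iter n f xi) by move=> n; exact: (Hf xi Xxi n).1.
  have Xue : forall n, X (iter n finv eta) by move=> n; apply: sube; exists n.
  have GAx := GA hZ FX Xux cKx (fun n => (Hf xi Xxi n).2).
  have GAe := GA hZ FX Xue cKe (Hb eta Xue).
  apply/seteqP; split.
    have [y' Hy'] := omega_nonempty Xue cKe.
    have Xy' : X y' by case: Hy'.
    have HFy' : omega_lim setT ginv (F eta) (F y') by rewrite GAe; exists y'.
    rewrite (Wconst xi y' Xxi Xy').
    exact: omega_sub cg ginvK HFy'.
  have [y Hy] := omega_nonempty Xux cKx.
  have Xy : X y by case: Hy.
  have HFy : omega_lim setT g (F xi) (F y) by rewrite GAx; exists y.
  rewrite (Aconst eta y Xeta Xy).
  exact: omega_sub cginv gK HFy.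
case: HS => [/HW [x1 [X1 [P1 E1]]] | /HA [x1 [X1 [P1 E1]]]];
  case: HS' => [/HW [x2 [X2 [P2 E2]]] | /HA [x2 [X2 [P2 E2]]]]; rewrite E1 E2.
- exact: Wconst.
- exact: Mixed.
- exact: esym (Mixed _ _ X2 P2 X1 P1).
- exact: Aconst.
Qed.
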